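(* Let $n\ge 1$ and consider a (categorical) extended linear classifier with features $e_1,\ldots,e_n$, where $e_j\in\{1,\ldots,d_j\}$, real weights $w_0$ and $v_j^r$ ($1\le j\le n$, $1\le r\le d_j$), score $\nu(\mathbf e)=w_0+\sum_{j=1}^n v_j^{e_j}$ and decision $\tau(\mathbf e)=\oplus$ iff $\nu(\mathbf e)>0$. Let $\mathbf a=(a_1,\ldots,a_n)$ be an instance with $\nu(\mathbf a)>0$, and define $\delta_j$ and $\Phi$ as in the context. Let $\langle l_1,\ldots,l_n\rangle$ be an ordering of $\{1,\ldots,n\}$ such that $\delta_{l_1}\ge\delta_{l_2}\ge\cdots\ge\delta_{l_n}$. Then there exists a (unique) $k\in\{0,\ldots,n\}$ with $\sum_{r=1}^{k}\delta_{l_r}>\Phi$ and $\sum_{r=1}^{k-1}\delta_{l_r}\le\Phi$ (where for $k=0$ the second condition is vacuous), and for $\mathcal P=\{l_1,\ldots,l_k\}$: (i) for every $\mathbf e$ in the feature space, if $e_j=a_j$ for all $j\in\mathcal P$ then $\nu(\mathbf e)>0$; and (ii) $\mathcal P$ is an optimal solution of the problem: minimize $\sum_{i=1}^n p_i$ subject to $\sum_{i=1}^n\delta_i p_i>\Phi$, $p_i\in\{0,1\}$ (identifying $\mathcal P$ with $p_i=1$ iff $i\in\mathcal P$). In particular $\mathcal P$ is a PI-explanation of minimum cardinality.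
   Context: Feature space: $\mathbb E=\prod_{j=1}^n\{1,\ldots,d_j\}$. For the instance $\mathbf a$, define $v_j^{\omega}=\min_{1\le r\le d_j}v_j^r$, $\delta_j=v_j^{a_j}-v_j^{\omega}\ (\ge 0)$, $\Gamma=\nu(\mathbf a)=w_0+\sum_j v_j^{a_j}$, and $\Phi=\sum_{j=1}^n\delta_j-\Gamma$ (so $-\Phi=w_0+\sum_j v_j^{\omega}$ is the worst-case score). A PI-explanation of the prediction $\tau(\mathbf a)=\oplus$ is a subset-minimal set $\mathcal P\subseteq\{1,\ldots,n\}$ such that for all $\mathbf e\in\mathbb E$, $\bigwedge_{j\in\mathcal P}(e_j=a_j)$ implies $\tau(\mathbf e)=\oplus$. *)

(* Defs.v *)
(* Features are 0-based: feature j takes values in 'I_(d j)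
   (= {0,...,d_j - 1}, in bijection with the paper's {1,...,d_j}). *)
From HB Require Import structures.
From mathcomp Require Import all_boot all_order all_algebra.
Set Implicit Arguments. Unset Strict Implicit. Unset Printing Implicit Defensive.
Import Order.TTheory GRing.Theory Num.Theory.
Local Open Scope ring_scope.

Section ELC.
Variables (R : realFieldType) (n : nat) (d : 'I_n -> nat).
Variables (w0 : R) (v : forall j : 'I_n, 'I_(d j) -> R).

Definition nu (e : forall j : 'I_n, 'I_(d j)) : R := w0 + \sum_(j < n) v (e j).

Definition tau_pos (e : forall j : 'I_n, 'I_(d j)) : bool := 0 < nu e.

Variable (a : forall j : 'I_n, 'I_(d j)).

(* v_j^omega = min_r v_j^r  (the domain 'I_(d j) is nonempty since it contains a_j;
   a_j's value is used only as the seed of the iterated min) *)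
Definition vomega (j : 'I_n) : R := \big[Num.min/v (a j)]_(r : 'I_(d j)) v r.

Definition delta (j : 'I_n) : R := v (a j) - vomega j.

Definition Phi : R := \sum_(j < n) delta j - nu a.

Definition sufficient (P : {set 'I_n}) : Prop :=
  forall e : forall j : 'I_n, 'I_(d j),
    (forall j, j \in P -> e j = a j) -> tau_pos e.

Definition PI_explanation (P : {set 'I_n}) : Prop :=
  sufficient P /\ forall Q : {set 'I_n}, Q \proper P -> ~ sufficient Q.

End ELC.

(* Main.v *)
Require Import Defs.
From HB Require Import structures.
From mathcomp Require Import all_boot all_order all_algebra all_fingroup.
From mathcomp Require Import lra zify.
Import Order.TTheory GRing.Theory Num.Theory.
Local Open Scope ring_scope.

Lemma vomega_le (R : realFieldType) (n : nat) (d : 'I_n -> nat)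
  (v : forall j : 'I_n, 'I_(d j) -> R) (a : forall j : 'I_n, 'I_(d j)) j r :
  vomega v a j <= v j r.
Proof. exact: bigmin_le. Qed.

Lemma delta_ge0 (R : realFieldType) (n : nat) (d : 'I_n -> nat)
  (v : forall j : 'I_n, 'I_(d j) -> R) (a : forall j : 'I_n, 'I_(d j)) j :
  0 <= delta v a j.
Proof. by rewrite /delta subr_ge0 vomega_le. Qed.

Lemma vomega_attained (R : realFieldType) (n : nat) (d : 'I_n -> nat)
  (v : forall j : 'I_n, 'I_(d j) -> R) (a : forall j : 'I_n, 'I_(d j)) j :
  exists r, vomega v a j = v j r.
Proof.
exists [arg min_(r < a j) v j r]%O.
case: arg_minP => // m _ Hm.
apply/eqP; rewrite eq_le vomega_le /vomega.
apply: le_bigmin => [|i _]; exact: Hm.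
Qed.

Lemma Phi_eq (R : realFieldType) (n : nat) (d : 'I_n -> nat) (w0 : R)
  (v : forall j : 'I_n, 'I_(d j) -> R) (a : forall j : 'I_n, 'I_(d j)) :
  Phi w0 v a = - (w0 + \sum_j vomega v a j).
Proof.
rewrite /Phi /nu /delta sumrB; lra.
Qed.

Lemma nu_lower (R : realFieldType) (n : nat) (d : 'I_n -> nat) (w0 : R)
  (v : forall j : 'I_n, 'I_(d j) -> R) (a : forall j : 'I_n, 'I_(d j))
  (Q : {set 'I_n}) e :
  (forall j, j \in Q -> e j = a j) ->
  \sum_(j in Q) delta v a j - Phi w0 v a <= nu w0 v e.
Proof.
move=> He; rewrite Phi_eq /nu big_mkcond /=.
have : \sum_j (vomega v a j + (if j \in Q then delta v a j else 0))
       <= \sum_j v j (e j).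
  apply: ler_sum => j _; case: ifP => jQ.
    by rewrite He // /delta addrC subrK.
  by rewrite addr0 vomega_le.
rewrite big_split /=; lra.
Qed.

Lemma nu_attain (R : realFieldType) (n : nat) (d : 'I_n -> nat) (w0 : R)
  (v : forall j : 'I_n, 'I_(d j) -> R) (a : forall j : 'I_n, 'I_(d j))
  (Q : {set 'I_n}) :
  exists e, (forall j, j \in Q -> e j = a j) /\
  nu w0 v e = \sum_(j in Q) delta v a j - Phi w0 v a.
Proof.
have [m Hm] : exists m : forall j, 'I_(d j), forall j, vomega v a j = v j (m j).
  exists (fun j => [arg min_(r < a j) v j r]%O) => j.
  case: arg_minP => // r _ Hr.
  apply/eqP; rewrite eq_le vomega_le /vomega.
  apply: le_bigmin => [|i _]; exact: Hr.
exists (fun j => if j \in Q then a j else m j); split.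
  by move=> j ->.
rewrite Phi_eq /nu big_mkcond /=.
have -> : \sum_j v j (if j \in Q then a j else m j) =
   \sum_j (vomega v a j + (if j \in Q then delta v a j else 0)).
  apply: eq_bigr => j _; case: ifP => jQ.
    by rewrite /delta addrC subrK.
  by rewrite addr0 Hm.
rewrite big_split [\sum_(j in Q) _]big_mkcond /=; lra.
Qed.

Lemma suff_iff (R : realFieldType) (n : nat) (d : 'I_n -> nat) (w0 : R)
  (v : forall j : 'I_n, 'I_(d j) -> R) (a : forall j : 'I_n, 'I_(d j))
  (Q : {set 'I_n}) :
  sufficient w0 v a Q <-> Phi w0 v a < \sum_(j in Q) delta v a j.
Proof.
split.
  move=> H; have [e [He1 He2]] := nu_attain _ _ _ w0 v a Q.
  have := H e He1; rewrite /tau_pos He2; lra.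
move=> H e He; rewrite /tau_pos.
have := nu_lower _ _ _ w0 v a Q e He; lra.
Qed.

Lemma card_lt (n m : nat) : (m <= n)%N -> #|[set r : 'I_n | (r < m)%N]| = m.
Proof.
move=> Hmn.
have -> : [set r : 'I_n | (r < m)%N] = [set widen_ord Hmn r | r in 'I_m].
  apply/setP => x; rewrite inE; apply/idP/imsetP.
    move=> Hx; exists (Ordinal Hx) => //; exact: val_inj.
  by case=> y _ ->; rewrite /= ltn_ord.
rewrite card_imset ?card_ord //.
by move=> x y /(congr1 val) /= H; apply: val_inj.
Qed.

Lemma top (R : realFieldType) (n : nat) (f : 'I_n -> R) :
  (forall r s : 'I_n, (r <= s)%N -> f s <= f r) ->
  forall A : {set 'I_n}, \sum_(r in A) f r <= \sum_(r < n | (r < #|A|)%N) f r.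
Proof.
move=> Hf A.
set m := #|A|.
have Hmn : (m <= n)%N by have := max_card A; rewrite card_ord.
set B := [set r : 'I_n | (r < m)%N].
have -> : \sum_(r < n | (r < m)%N) f r = \sum_(r in B) f r.
  by apply: eq_bigl => r; rewrite inE.
have cB : #|B| = m by rewrite card_lt.
rewrite [in X in X <= _](big_setID B) [in X in _ <= X](big_setID A) /= setIC.
apply: lerD => //.
have cD : #|A :\: B| = #|B :\: A|.
  have h1 := cardsID B A; have h2 := cardsID A B.
  rewrite setIC in h2. rewrite cB in h2. rewrite -/m in h1. by apply/eqP; rewrite -(eqn_add2l #|A :&: B|) h1 h2.
case: (posnP m) => [m0|mpos].
  have -> : A :\: B = set0.
    apply/setP => x; rewrite !inE /= m0 /=.
    apply/negP => xA.
    have : (0 < m)%N by rewrite /m (cardD1 x) xA.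
    by rewrite m0.
  rewrite big_set0 sumr_ge0 //.
  by move=> x; rewrite !inE m0 andbF.
have Hc : (m.-1 < n)%N by rewrite prednK.
set c := f (Ordinal Hc).
apply: (@le_trans _ _ (\sum_(x in A :\: B) c)).
  apply: ler_sum => x; rewrite !inE /= -leqNgt => /andP [Hx _].
  apply: Hf => /=; exact: leq_trans (leq_pred m) Hx.
apply: (@le_trans _ _ (\sum_(x in B :\: A) c)).
  by rewrite !sumr_const cD.
apply: ler_sum => x; rewrite !inE /= => /andP [_ Hx].
apply: Hf => /=; by rewrite -ltnS prednK.
Qed.

Lemma S_mono (R : realFieldType) (n : nat) (f : 'I_n -> R) :
  (forall r, 0 <= f r) -> forall k k', (k <= k')%N ->
  \sum_(r < n | (r < k)%N) f r <= \sum_(r < n | (r < k')%N) f r.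
Proof.
move=> H k k' Hk; rewrite [X in X <= _]big_mkcond [X in _ <= X]big_mkcond /=.
apply: ler_sum => r _; case: ifP => h1.
  by rewrite (leq_trans h1 Hk).
by case: ifP.
Qed.

Lemma sumQ_le (R : realFieldType) (n : nat) (f : 'I_n -> R) (l : {perm 'I_n}) :
  (forall r s : 'I_n, (r <= s)%N -> f (l s) <= f (l r)) ->
  forall Q : {set 'I_n}, \sum_(j in Q) f j <= \sum_(r < n | (r < #|Q|)%N) f (l r).
Proof.
move=> Hf Q.
rewrite (reindex_inj (@perm_inj _ l)) /=.
have -> : \sum_(j | l j \in Q) f (l j) = \sum_(j in l @^-1: Q) f (l j).
  by apply: eq_bigl => j; rewrite inE.
rewrite -(card_preimset Q (@perm_inj _ l)).
exact: (top _ _ (fun r => f (l r)) Hf).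
Qed.

Theorem proposition1 (R : realFieldType) (n : nat) (d : 'I_n -> nat)
  (w0 : R) (v : forall j : 'I_n, 'I_(d j) -> R)
  (a : forall j : 'I_n, 'I_(d j)) (l : {perm 'I_n}) :
  (0 < n)%N ->
  0 < nu w0 v a ->
  (forall r s : 'I_n, (r <= s)%N -> delta v a (l s) <= delta v a (l r)) ->
  let cond (k : 'I_n.+1) :=
    Phi w0 v a < \sum_(r < n | (r < k)%N) delta v a (l r) /\
    ((0 < k)%N -> \sum_(r < n | (r < k.-1)%N) delta v a (l r) <= Phi w0 v a) in
  exists k : 'I_n.+1,
    cond k /\ (forall k' : 'I_n.+1, cond k' -> k' = k) /\
    let P := [set l r | r : 'I_n & (r < k)%N] in
    (* (i) *)
    (forall e : forall j : 'I_n, 'I_(d j),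
        (forall j, j \in P -> e j = a j) -> 0 < nu w0 v e) /\
    (* (ii) P is an optimal solution of the 0-1 program *)
    (Phi w0 v a < \sum_(i < n) delta v a i * (i \in P)%:R /\
     forall p : 'I_n -> bool,
       Phi w0 v a < \sum_(i < n) delta v a i * (p i)%:R ->
       \sum_(i < n) ((i \in P) : nat)%:R <= \sum_(i < n) ((p i) : nat)%:R :> R) /\
    (* in particular: a PI-explanation of minimum cardinality *)
    (PI_explanation w0 v a P /\
     forall Q : {set 'I_n}, PI_explanation w0 v a Q -> (#|P| <= #|Q|)%N).
Proof.
move=> n0 nupos mono cond.
set S := fun k => \sum_(r < n | (r < k)%N) delta v a (l r).
have Smono : forall k k', (k <= k')%N -> S k <= S k'.
  by move=> k k'; apply: S_mono => r; exact: delta_ge0.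
have Sn : S n = \sum_j delta v a j.
  rewrite /S (eq_bigl xpredT) => [|r]; last by rewrite ltn_ord.
  by rewrite [in RHS](reindex_inj (@perm_inj _ l)).
have SQ : forall Q : {set 'I_n}, \sum_(j in Q) delta v a j <= S #|Q|.
  by move=> Q; apply: sumQ_le.
have exP : exists k, (k <= n)%N && (Phi w0 v a < S k).
  exists n; rewrite leqnn /= Sn /Phi; lra.
case: (ex_minnP exP) => k /andP [kn Hk] kmin.
have kmin' : forall j, (j < k)%N -> S j <= Phi w0 v a.
  move=> j jk; rewrite leNgt; apply/negP => H.
  have := kmin j; rewrite H andbT (leq_trans (ltnW jk) kn) => /(_ isT).
  by rewrite leqNgt jk.
have ge_k : forall Q : {set 'I_n}, Phi w0 v a < \sum_(j in Q) delta v a j ->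
    (k <= #|Q|)%N.
  move=> Q HQ; rewrite leqNgt; apply/negP => /kmin' H.
  have := SQ Q; lra.
have kn1 : (k < n.+1)%N by [].
exists (Ordinal kn1).
have condk : cond (Ordinal kn1).
  split => //= k0; apply: kmin'; by rewrite prednK.
split => //; split.
  move=> k' [H1 H2]; apply: val_inj => /=.
  apply/eqP; rewrite eqn_leq andbC; apply/andP; split.
    apply: (kmin k'); apply/andP; split; [by rewrite -ltnS | exact: H1].
  rewrite leqNgt; apply/negP => kk'.
  have k'0 : (0 < k')%N by apply: leq_ltn_trans kk'.
  have := H2 k'0.
  have := Smono k k'.-1; rewrite -ltnS prednK // => /(_ kk').
  rewrite /S in Hk *; lra.
move=> P.
have memP : forall r, (l r \in P) = (r < k)%N.
  by move=> r; rewrite /P mem_imset ?inE //; exact: perm_inj.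
have sumP : \sum_(j in P) delta v a j = S k.
  rewrite (reindex_inj (@perm_inj _ l)) /=.
  by apply: eq_bigl => r; rewrite memP.
have cardP : #|P| = k.
  rewrite /P card_imset; last exact: perm_inj.
  exact: (card_lt n k kn).
have suffP : sufficient w0 v a P by apply/suff_iff; rewrite sumP.
have cnt : forall q : 'I_n -> bool,
    \sum_(i < n) ((q i) : nat)%:R = (#|[set i | q i]|)%:R :> R.
  move=> q; rewrite -sumr_const [RHS]big_mkcond /=.
  by apply: eq_bigr => i _; rewrite inE; case: (q i).
have dsum : forall q : 'I_n -> bool,
    \sum_(i < n) delta v a i * (q i)%:R = \sum_(i in [set i | q i]) delta v a i.
  move=> q; rewrite [RHS]big_mkcond /=.
  by apply: eq_bigr => i _; rewrite inE; case: (q i); rewrite ?mulr1 ?mulr0.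
split; [|split; [split|split]].
- by move=> e He; exact: suffP e He.
- rewrite (dsum (fun i => i \in P)).
  have -> : [set i | i \in P] = P by apply/setP => i; rewrite inE.
  by rewrite sumP.
- move=> p Hp.
  rewrite (cnt (fun i => i \in P)) cnt ler_nat.
  have -> : [set i | i \in P] = P by apply/setP => i; rewrite inE.
  rewrite cardP; apply: ge_k; by rewrite -dsum.
- split => // Q QP /suff_iff /ge_k H.
  by have := proper_card QP; rewrite cardP ltnNge H.
- move=> Q [/suff_iff /ge_k H _]; by rewrite cardP.
Qed.
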